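(* Let $\Phi_{CC}$ be a PCDS quantum channel on $\mathcal{H}_C=\mathcal{H}_A\oplus\mathcal{H}_B$, with diagonal blocks $\Phi_{AA}$ and $\Phi_{BB}$ (which are quantum channels on $\mathcal{H}_A$ and $\mathcal{H}_B$ respectively). Then $\Phi_{CC}$ is degradable if and only if both $\Phi_{AA}$ and $\Phi_{BB}$ are degradable.
   Context: All Hilbert spaces are finite-dimensional. $\mathcal{H}_C=\mathcal{H}_A\oplus\mathcal{H}_B$ with orthogonal projectors $\hat P_{AA},\hat P_{BB}$ onto the two nontrivial summands, and for an operator $\hat\Theta_{CC}$ on $\mathcal{H}_C$, $\hat\Theta_{XY}:=\hat P_{XX}\hat\Theta_{CC}\hat P_{YY}$. A quantum channel $\Phi_{CC}$ on $\mathcal{H}_C$ is PCDS if there are linear maps $\Phi_{AA},\Phi_{BB},\Phi^{(off)}_{AB},\Phi^{(off)}_{BA}$ (acting on operators $\mathcal{H}_A\to\mathcal{H}_A$, $\mathcal{H}_B\to\mathcal{H}_B$, $\mathcal{H}_B\to\mathcal{H}_A$, $\mathcal{H}_A\to\mathcal{H}_B$ respectively) with $\Phi_{CC}[\hat\Theta_{CC}]=\Phi_{AA}[\hat\Theta_{AA}]+\Phi_{BB}[\hat\Theta_{BB}]+\Phi^{(off)}_{AB}[\hat\Theta_{AB}]+\Phi^{(off)}_{BA}[\hat\Theta_{BA}]$ for all $\hat\Theta_{CC}$; equivalently, it has a Kraus set $\{\hat M^{(j)}_{CC}=\hat M^{(j)}_{AA}+\hat M^{(j)}_{BB}\}_j$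 of block-diagonal operators, and then $\Phi_{XX}[\cdot]=\sum_j\hat M^{(j)}_{XX}\cdot\hat M^{(j)\dagger}_{XX}$ for $X=A,B$. For a channel $\Phi_{XX}$ with Kraus set $\{\hat M^{(j)}\}_j$ and an orthonormal set $\{|j_E\rangle\}$ of an environment space $\mathcal{H}_E$, the complementary channel is $\tilde\Phi_{EX}[\hat\Theta]=\sum_{j,j'}|j_E\rangle\langle j'_E|\,\mathrm{Tr}[\hat M^{(j')\dagger}\hat M^{(j)}\hat\Theta]$ (defined up to a unitary on $E$). $\Phi_{XX}$ is degradable if there exists a quantum channel $\Lambda_{EX}$ from $X$ to $E$ with $\tilde\Phi_{EX}=\Lambda_{EX}\circ\Phi_{XX}$. *)

(* Defs.v *)
(* Finite-dimensional Hilbert spaces over the complex numbers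
   C = R[i] (R a real closed field of reals, R : realType); an operator on a
   d-dimensional space is a matrix 'M[R[i]]_d, an operator from an n-dim to an
   m-dim space is 'M[R[i]]_(m, n). *)
From HB Require Import structures.
From mathcomp Require Import all_boot all_order all_algebra.
From mathcomp Require Import complex.
From mathcomp Require Import reals.
Set Implicit Arguments.
Unset Strict Implicit.
Unset Printing Implicit Defensive.
Import Order.TTheory GRing.Theory Num.Theory.
Local Open Scope ring_scope.

Section QDefs.
Variable R : realType.
Local Notation C := R[i].

Definition adjmx (m n : nat) (A : 'M[C]_(m, n)) : 'M[C]_(n, m) :=
  (map_mx Num.conj A)^T.

Definition is_kraus (m n r : nat) (K : 'I_r -> 'M[C]_(m, n)) : Prop :=
  \sum_(j < r) adjmx (K j) *m K j = 1%:M.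

Definition kraus_map (m n r : nat) (K : 'I_r -> 'M[C]_(m, n))
  (X : 'M[C]_n) : 'M[C]_m :=
  \sum_(j < r) (K j *m X *m adjmx (K j)).

Definition kraus_of (m n r : nat) (Phi : 'M[C]_n -> 'M[C]_m)
  (K : 'I_r -> 'M[C]_(m, n)) : Prop :=
  is_kraus K /\ forall X, Phi X = kraus_map K X.

(* Quantum channel (CPTP map) from an n-dim to an m-dim space, in Kraus form
   (finite-dimensional Kraus/Choi representation theorem). *)
Definition quantum_channel (m n : nat) (Phi : 'M[C]_n -> 'M[C]_m) : Prop :=
  exists r (K : 'I_r -> 'M[C]_(m, n)), kraus_of Phi K.

(* Complementary channel associated to the Kraus set K, with orthonormal
   basis {|j_E>}_{j<r} of the environment:
   tilde Phi[Theta] = sum_{j,j'} |j_E><j'_E| Tr[K_{j'}^dag K_j Theta]. *)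
Definition complementary (m n r : nat) (K : 'I_r -> 'M[C]_(m, n))
  (Theta : 'M[C]_n) : 'M[C]_r :=
  \matrix_(j < r, j' < r) \tr (adjmx (K j') *m K j *m Theta).

(* Degradability of a channel Phi on an n-dim space X: for a Kraus set K of
   Phi, there is a quantum channel Lambda from X to E with
   tilde Phi = Lambda o Phi.  (The property does not depend on the chosen
   Kraus set; we quantify existentially.) *)
Definition degradable (n : nat) (Phi : 'M[C]_n -> 'M[C]_n) : Prop :=
  exists r (K : 'I_r -> 'M[C]_n),
    kraus_of Phi K /\
    exists Lambda : 'M[C]_n -> 'M[C]_r,
      quantum_channel Lambda /\
      forall Theta, complementary K Theta = Lambda (Phi Theta).

Definition is_linear_map (m1 n1 m2 n2 : nat)
  (f : 'M[C]_(m1, n1) -> 'M[C]_(m2, n2)) : Prop :=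
  forall (c : C) x y, f (c *: x + y) = c *: f x + f y.

(* PCDS: H_C = H_A (+) H_B with dim H_A = a, dim H_B = b; the first a basis
   vectors span H_A.  Theta_XY = P_XX Theta P_YY is identified with the
   corresponding block of Theta, embedded back into H_C with zeros elsewhere. *)
Definition PCDS_decomp (a b : nat) (Phi : 'M[C]_(a + b) -> 'M[C]_(a + b))
  (PhiAA : 'M[C]_a -> 'M[C]_a) (PhiBB : 'M[C]_b -> 'M[C]_b)
  (PhiAB : 'M[C]_(a, b) -> 'M[C]_(a, b))
  (PhiBA : 'M[C]_(b, a) -> 'M[C]_(b, a)) : Prop :=
  forall Theta : 'M[C]_(a + b),
    Phi Theta =
      block_mx (PhiAA (ulsubmx Theta)) 0 0 0
    + block_mx 0 0 0 (PhiBB (drsubmx Theta))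
    + block_mx 0 (PhiAB (ursubmx Theta)) 0 0
    + block_mx 0 0 (PhiBA (dlsubmx Theta)) 0.

End QDefs.

(* Main.v *)
Require Import Defs.
From HB Require Import structures.
From mathcomp Require Import all_boot all_order all_algebra.
From mathcomp Require Import complex.
From mathcomp Require Import reals.
Import GRing.Theory Num.Theory.
Local Open Scope ring_scope.
Section S.
Variable R : realType.
Local Notation C := R[i].
Lemma adjmxM m n p (A : 'M[C]_(m,n)) (B : 'M[C]_(n,p)) : adjmx (A *m B) = adjmx B *m adjmx A.
Proof. by rewrite /adjmx map_mxM trmx_mul. Qed.
Lemma adjmxK m n (A : 'M[C]_(m,n)) : adjmx (adjmx A) = A.
Proof. by apply/matrixP=> i j; rewrite !mxE conjCK. Qed.
Lemma adjmxD m n (A B : 'M[C]_(m,n)) : adjmx (A + B) = adjmx A + adjmx B.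
Proof. by apply/matrixP=> i j; rewrite !mxE rmorphD. Qed.
Lemma adjmxN m n (A : 'M[C]_(m,n)) : adjmx (- A) = - adjmx A.
Proof. by apply/matrixP=> i j; rewrite !mxE rmorphN. Qed.
Lemma adjmxB m n (A B : 'M[C]_(m,n)) : adjmx (A - B) = adjmx A - adjmx B.
Proof. by rewrite adjmxD adjmxN. Qed.
Lemma adjmx0 m n : adjmx (0 : 'M[C]_(m,n)) = 0.
Proof. by apply/matrixP=> i j; rewrite !mxE rmorph0. Qed.
Lemma adjmx1 n : adjmx (1%:M : 'M[C]_n) = 1%:M.
Proof. by apply/matrixP=> i j; rewrite !mxE eq_sym; case: eqP; rewrite ?rmorph1 ?rmorph0. Qed.
Lemma adjmx_sum m n r (F : 'I_r -> 'M[C]_(m,n)) : adjmx (\sum_j F j) = \sum_j adjmx (F j).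
Proof.
elim/big_ind2: _ => //; first exact: adjmx0.
by move=> x A y B <- <-; rewrite adjmxD.
Qed.
Lemma adjmx_block m1 m2 n1 n2 (A : 'M[C]_(m1,n1)) (B : 'M[C]_(m1,n2)) (D : 'M[C]_(m2,n1)) (E : 'M[C]_(m2,n2)) :
  adjmx (block_mx A B D E) = block_mx (adjmx A) (adjmx D) (adjmx B) (adjmx E).
Proof. by rewrite /adjmx map_block_mx tr_block_mx. Qed.

Lemma psd_sum_eq0 m n r (M : 'I_r -> 'M[C]_(m,n)) :
  \sum_j M j *m adjmx (M j) = 0 -> forall j, M j = 0.
Proof.
move=> H j; apply/matrixP=> x y; rewrite mxE.
have /matrixP /(_ x x) := H; rewrite summxE mxE.
under eq_bigr => k _ do rewrite mxE.
move/eqP; rewrite psumr_eq0 => [/allP /(_ j (mem_index_enum _)) | k _]; last first.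
  by apply: sumr_ge0 => l _; rewrite !mxE mul_conjC_ge0.
rewrite /= psumr_eq0 => [/allP /(_ y (mem_index_enum _)) | l _]; last by rewrite !mxE mul_conjC_ge0.
by rewrite /= !mxE mul_conjC_eq0 => /eqP.
Qed.
Lemma psd_eq0 m n (M : 'M[C]_(m,n)) : M *m adjmx M = 0 -> M = 0.
Proof.
move=> H; have := @psd_sum_eq0 m n 1 (fun _ => M).
by rewrite big_ord1 => /(_ H ord0).
Qed.

Definition pidx q p (k : 'I_(q * p)) : 'I_q * 'I_p :=
  enum_val (cast_ord (esym (mxvec_cast q p)) k).
Arguments pidx {q p}.
Lemma pidxK q p (i : 'I_q) (j : 'I_p) : pidx (mxvec_index i j) = (i, j).
Proof. by rewrite /pidx /mxvec_index cast_ordK enum_rankK. Qed.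
Lemma sum_pidx q p (Z : nmodType) (G : 'I_(q * p) -> Z) :
  \sum_k G k = \sum_i \sum_j G (mxvec_index i j).
Proof.
rewrite (reindex _ (curry_mxvec_bij _ _)) /= pair_big /=.
by apply: eq_bigr => -[i j].
Qed.

Lemma channel_comp m n k (L1 : 'M[C]_n -> 'M[C]_m) (L2 : 'M[C]_m -> 'M[C]_k) :
  quantum_channel L1 -> quantum_channel L2 -> quantum_channel (L2 \o L1).
Proof.
move=> [p [K1 [HK1 EK1]]] [q [K2 [HK2 EK2]]].
pose K (x : 'I_(q * p)) := K2 (pidx x).1 *m K1 (pidx x).2.
exists (q * p)%N, K; split.
  rewrite /is_kraus (@sum_pidx q p) exchange_big /= -HK1; apply: eq_bigr => j _.
  rewrite -[X in _ = X *m _]mulmx1 -HK2 mulmx_sumr mulmx_suml.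
  idtac.
  by apply: eq_bigr => i _; rewrite /K pidxK /= adjmxM !mulmxA.
move=> X /=; rewrite EK1 EK2 /kraus_map (@sum_pidx q p).
apply: eq_bigr => i _; rewrite mulmx_sumr mulmx_suml.
by apply: eq_bigr => j _; rewrite /K pidxK /= adjmxM !mulmxA.
Qed.

Lemma ginv_exists N (J : 'M[C]_N) : adjmx J = J ->
  exists Jp, [/\ adjmx Jp = Jp, J *m Jp *m J = J & Jp *m J *m Jp = Jp].
Proof.
move=> hJ; have [B JBJ] : exists B, J *m B *m J = J.
  by exists (pinvmx J); rewrite mulmxKpV.
have JaBJ : J *m adjmx B *m J = J.
  by have := congr1 (@adjmx R N N) JBJ; rewrite !adjmxM hJ mulmxA.
have [B1 [aB1 JB1J]] : exists B1, adjmx B1 = B1 /\ J *m B1 *m J = J.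
  exists (B *m J *m adjmx B); split; first by rewrite !adjmxM adjmxK hJ mulmxA.
  by rewrite !mulmxA JBJ; exact: JaBJ.
exists (B1 *m J *m B1); split.
- by rewrite !adjmxM aB1 hJ mulmxA.
- by rewrite !mulmxA JB1J JB1J.
- have E X : X *m J *m B1 *m J = X *m J by rewrite -!mulmxA (mulmxA J) JB1J.
  by rewrite !mulmxA E E.
Qed.

Lemma ker_lemma r N (F : 'M[C]_(r,N)) (J Jp : 'M_N) :
  J = adjmx F *m F -> J *m Jp *m J = J -> F *m Jp *m J = F.
Proof.
move=> hJ hJp; pose K := 1%:M - Jp *m J.
have JK : J *m K = 0 by rewrite /K mulmxBr mulmx1 mulmxA hJp subrr.
have : adjmx (F *m K) *m adjmx (adjmx (F *m K)) = 0.
  by rewrite adjmxK adjmxM -mulmxA (mulmxA (adjmx F)) -hJ JK mulmx0.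
move/psd_eq0 => /(congr1 (@adjmx R _ _)); rewrite adjmxK adjmx0.
by rewrite /K mulmxBr mulmx1 mulmxA => /eqP; rewrite subr_eq0 => /eqP <-.
Qed.

Lemma kf_mat r1 r2 N (F : 'M[C]_(r1,N)) (G : 'M[C]_(r2,N)) :
  adjmx F *m F = adjmx G *m G -> exists A : 'M_(r2,r1),
  [/\ A *m F = G,
      adjmx (1%:M - adjmx A *m A) *m (1%:M - adjmx A *m A) = 1%:M - adjmx A *m A
    & (1%:M - adjmx A *m A) *m F = 0].
Proof.
move=> hFG; have [J defJ] : exists J, J = adjmx F *m F by eexists.
have hJ : adjmx J = J by rewrite defJ adjmxM adjmxK.
have [Jp [aJp JJpJ JpJJp]] := @ginv_exists N J hJ.
have kF : F *m Jp *m J = F by apply: ker_lemma.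
have kG : G *m Jp *m J = G by apply: (@ker_lemma _ _ G J) => //; rewrite defJ hFG.
exists (G *m Jp *m adjmx F).
have -> : adjmx (G *m Jp *m adjmx F) *m (G *m Jp *m adjmx F) = F *m Jp *m adjmx F.
  rewrite !adjmxM adjmxK aJp !mulmxA -(mulmxA _ (adjmx G)) -hFG.
  by rewrite -!mulmxA (mulmxA (adjmx F) F) -defJ (mulmxA Jp J) (mulmxA _ Jp) JpJJp.
have QQ : F *m Jp *m adjmx F *m F *m Jp *m adjmx F = F *m Jp *m adjmx F.
  by rewrite -!mulmxA (mulmxA (adjmx F) F) -defJ (mulmxA Jp J) (mulmxA _ Jp) JpJJp.
split.
- by rewrite -mulmxA -defJ kG.
- rewrite adjmxB adjmx1 !adjmxM adjmxK aJp mulmxBl mul1mx mulmxBr mulmx1 !mulmxA QQ.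
  by rewrite subrr subr0.
- by rewrite mulmxBl mul1mx -(mulmxA _ (adjmx F)) -defJ kF subrr.
Qed.

Lemma adjmx_delta m n (i : 'I_m) (j : 'I_n) : adjmx (delta_mx i j : 'M[C]_(m,n)) = delta_mx j i.
Proof. by rewrite /adjmx map_delta_mx trmx_delta. Qed.

Lemma proj_channel r1 r2 (A : 'M[C]_(r2,r1)) : (0 < r2)%N ->
  adjmx (1%:M - adjmx A *m A) *m (1%:M - adjmx A *m A) = 1%:M - adjmx A *m A ->
  exists Lam : 'M[C]_r1 -> 'M[C]_r2, quantum_channel Lam /\
    forall Y, (1%:M - adjmx A *m A) *m Y = 0 -> Lam Y = A *m Y *m adjmx A.
Proof.
move=> hr2; set Pi := 1%:M - _ => hPi; pose k0 := Ordinal hr2.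
pose K (i : 'I_(1 + r1)) := match split i with inl _ => A | inr l => delta_mx k0 l *m Pi end.
have K0 : K (lshift r1 ord0) = A by rewrite /K (unsplitK (inl _)).
have KS l : K (rshift 1 l) = delta_mx k0 l *m Pi by rewrite /K (unsplitK (inr _)).
exists (kraus_map K); split.
  exists (1 + r1)%N, K; split => //.
  rewrite /is_kraus big_split_ord /= big_ord1 K0.
  under eq_bigr => l _ do rewrite KS adjmxM adjmx_delta mulmxA -(mulmxA _ (delta_mx l k0)) mul_delta_mx.
  rewrite -mulmx_suml -mulmx_sumr -mx1_sum_delta mulmx1 hPi /Pi.
  by rewrite addrC subrK.
move=> Y hY; rewrite /kraus_map big_split_ord /= big_ord1 K0 big1 ?addr0 // => l _.
by rewrite KS adjmxM -!mulmxA (mulmxA Pi) hY !mul0mx mulmx0.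
Qed.

Lemma sum_kron n (f : 'I_n -> C) v : \sum_l f l * (l == v)%:R = f v.
Proof.
rewrite (bigD1 v) //= eqxx mulr1 big1 ?addr0 // => l /negPf ->; by rewrite mulr0.
Qed.

Lemma entry_conj n (M : 'M[C]_n) v u y x :
  (M *m delta_mx v u *m adjmx M) y x = M y v * (M x u)^*.
Proof.
rewrite !mxE (bigD1 u) //= big1 ?addr0 => [|k /negPf hk]; last first.
  rewrite !mxE; under eq_bigr => l _ do rewrite mxE hk andbF mulr0.
  by rewrite big1 ?mul0r.
rewrite !mxE; congr (_ * _).
under eq_bigr => l _ do rewrite mxE eqxx andbT.
exact: sum_kron.
Qed.

Definition vecK {n r} (P : 'I_r -> 'M[C]_n) : 'M[C]_(r, n * n) :=
  \matrix_(j, a) mxvec (P j) 0 a.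

Lemma vecK_gram n r1 r2 (P : 'I_r1 -> 'M[C]_n) (Q : 'I_r2 -> 'M[C]_n) :
  (forall X, kraus_map P X = kraus_map Q X) ->
  adjmx (vecK P) *m vecK P = adjmx (vecK Q) *m vecK Q.
Proof.
move=> hPQ; apply/matrixP => a b.
case/mxvec_indexP: a => x u; case/mxvec_indexP: b => y v.
have E : \sum_j P j y v * (P j x u)^* = \sum_j Q j y v * (Q j x u)^*.
  rewrite -(eq_bigr _ (fun j _ => entry_conj _ (P j) v u y x)).
  rewrite -(eq_bigr _ (fun j _ => entry_conj _ (Q j) v u y x)).
  by rewrite -!summxE; have := hPQ (delta_mx v u); rewrite /kraus_map => ->.
rewrite !mxE; transitivity (\sum_j P j y v * (P j x u)^*).
  by apply: eq_bigr => j _; rewrite !mxE !mxvecE mulrC.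
rewrite E; apply: eq_bigr => j _; by rewrite !mxE !mxvecE mulrC.
Qed.

Definition Xi {n} (X : 'M[C]_n) : 'M[C]_(n * n) :=
  \matrix_(a, b) (((pidx a).1 == (pidx b).1)%:R * X (pidx a).2 (pidx b).2).

Lemma comp_vec n r (P : 'I_r -> 'M[C]_n) X :
  complementary P X = vecK P *m Xi X *m adjmx (vecK P).
Proof.
apply/matrixP => j j'; rewrite !mxE.
transitivity (\sum_x \sum_u \sum_w (P j' x u)^* * P j x w * X w u).
  rewrite /mxtrace exchange_big; apply: eq_bigr => u _.
  rewrite mxE; under [in LHS]eq_bigr => w _ do rewrite mxE big_distrl.
  rewrite exchange_big; apply: eq_bigr => x _; apply: eq_bigr => w _.
  by rewrite !mxE.
rewrite [RHS](@sum_pidx n n); apply: eq_bigr => x _; apply: eq_bigr => u _.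
rewrite [in RHS]mxE [in RHS](@sum_pidx n n) [in RHS]big_distrl [in RHS](bigD1 x) //= [X in _ = _ + X]big1 ?addr0; last first.
  move=> x' /negPf hx; rewrite big_distrl big1 // => w _.
  by rewrite !mxE !pidxK /= hx mul0r mulr0 mul0r.
rewrite big_distrl; apply: eq_bigr => w _.
rewrite !mxE !pidxK /= !mxvecE eqxx mul1r.
by rewrite [RHS]mulrC mulrA.
Qed.


Lemma kraus_freedom n r1 r2 (P : 'I_r1 -> 'M[C]_n) (Q : 'I_r2 -> 'M[C]_n)
  (Lam : 'M[C]_n -> 'M[C]_r1) :
  (0 < r2)%N -> (forall X, kraus_map P X = kraus_map Q X) -> quantum_channel Lam ->
  (forall X, complementary P X = Lam (kraus_map P X)) ->
  exists Lam' : 'M[C]_n -> 'M[C]_r2, quantum_channel Lam' /\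
    forall X, complementary Q X = Lam' (kraus_map Q X).
Proof.
move=> hr2 hPQ hLam hcomp.
have [A [AF hPi PiF]] := @kf_mat _ _ _ _ _ (@vecK_gram _ _ _ _ _ hPQ).
have [L2 [hL2 EL2]] := @proj_channel _ _ _ hr2 hPi.
exists (L2 \o Lam); split; first exact: channel_comp.
move=> X /=; rewrite -hPQ -hcomp EL2; last by rewrite comp_vec !mulmxA PiF !mul0mx.
by rewrite !comp_vec -AF !adjmxM !mulmxA.
Qed.

Section Blocks.
Variables m1 m2 : nat.
Implicit Types (Th : 'M[C]_(m1 + m2)).

Lemma adjmx_row p (A : 'M[C]_(p, m1)) (B : 'M[C]_(p, m2)) :
  adjmx (row_mx A B) = col_mx (adjmx A) (adjmx B).
Proof. by rewrite /adjmx map_row_mx tr_row_mx. Qed.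

Lemma bd_conj (P : 'M[C]_m1) (T : 'M[C]_m2) Th :
  block_mx P 0 0 T *m Th *m adjmx (block_mx P 0 0 T) =
  block_mx (P *m ulsubmx Th *m adjmx P) (P *m ursubmx Th *m adjmx T)
           (T *m dlsubmx Th *m adjmx P) (T *m drsubmx Th *m adjmx T).
Proof.
rewrite -[Th in LHS]submxK adjmx_block !adjmx0 !mulmx_block.
by rewrite !mulmx0 !mul0mx !addr0 !add0r.
Qed.

Lemma bd_gram (P : 'M[C]_m1) (T : 'M[C]_m2) :
  adjmx (block_mx P 0 0 T) *m block_mx P 0 0 T =
  block_mx (adjmx P *m P) 0 0 (adjmx T *m T).
Proof.
by rewrite adjmx_block !adjmx0 !mulmx_block !mulmx0 !mul0mx !addr0 !add0r.
Qed.

Lemma bd_tr (P P' : 'M[C]_m1) (T T' : 'M[C]_m2) Th :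
  \tr (adjmx (block_mx P' 0 0 T') *m block_mx P 0 0 T *m Th) =
  \tr (adjmx P' *m P *m ulsubmx Th) + \tr (adjmx T' *m T *m drsubmx Th).
Proof.
rewrite -[Th in LHS]submxK adjmx_block !adjmx0 !mulmx_block.
by rewrite !(mulmx0, mul0mx, addr0, add0r) mxtrace_block.
Qed.

Lemma row_conj_l p (L : 'M[C]_(p, m1 + m2)) (Y : 'M[C]_m1) :
  L *m block_mx Y 0 0 0 *m adjmx L = lsubmx L *m Y *m adjmx (lsubmx L).
Proof.
rewrite -[L in LHS]hsubmxK adjmx_row mul_row_block !mulmx0 !addr0 mul_row_col.
by rewrite !mul0mx addr0.
Qed.

Lemma row_conj_r p (L : 'M[C]_(p, m1 + m2)) (Y : 'M[C]_m2) :
  L *m block_mx 0 0 0 Y *m adjmx L = rsubmx L *m Y *m adjmx (rsubmx L).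
Proof.
rewrite -[L in LHS]hsubmxK adjmx_row mul_row_block !mulmx0 !add0r mul_row_col.
by rewrite !mul0mx add0r.
Qed.

Lemma row_gram p (A : 'M[C]_(p, m1)) (B : 'M[C]_(p, m2)) :
  adjmx (row_mx A B) *m row_mx A B =
  block_mx (adjmx A *m A) (adjmx A *m B) (adjmx B *m A) (adjmx B *m B).
Proof. by rewrite adjmx_row mul_col_row. Qed.

Lemma row0_conj_l p (A : 'M[C]_(p, m1)) Th :
  row_mx A 0 *m Th *m adjmx (row_mx A 0) = A *m ulsubmx Th *m adjmx A.
Proof.
rewrite -[Th in LHS]submxK adjmx_row adjmx0 mul_row_block !mul0mx !addr0 mul_row_col.
by rewrite mulmx0 addr0.
Qed.

Lemma row0_conj_r p (B : 'M[C]_(p, m2)) Th :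
  row_mx 0 B *m Th *m adjmx (row_mx 0 B) = B *m drsubmx Th *m adjmx B.
Proof.
rewrite -[Th in LHS]submxK adjmx_row adjmx0 mul_row_block !mul0mx !add0r mul_row_col.
by rewrite mulmx0 add0r.
Qed.

Lemma dl_conj (K : 'M[C]_(m1 + m2)) :
  drsubmx (K *m block_mx 1%:M 0 0 0 *m adjmx K) = dlsubmx K *m adjmx (dlsubmx K).
Proof.
rewrite -[K in LHS]submxK adjmx_block !mulmx_block block_mxKdr.
by rewrite !(mulmx0, mul0mx, addr0, add0r, mulmx1).
Qed.

Lemma ur_conj (K : 'M[C]_(m1 + m2)) :
  ulsubmx (K *m block_mx 0 0 0 1%:M *m adjmx K) = ursubmx K *m adjmx (ursubmx K).
Proof.
rewrite -[K in LHS]submxK adjmx_block !mulmx_block block_mxKul.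
by rewrite !(mulmx0, mul0mx, addr0, add0r, mulmx1).
Qed.

Lemma ul_sum r (F : 'I_r -> 'M[C]_(m1 + m2)) : ulsubmx (\sum_j F j) = \sum_j ulsubmx (F j).
Proof. by apply/matrixP => i k; rewrite !mxE !summxE; apply: eq_bigr => j _; rewrite !mxE. Qed.
Lemma dr_sum r (F : 'I_r -> 'M[C]_(m1 + m2)) : drsubmx (\sum_j F j) = \sum_j drsubmx (F j).
Proof. by apply/matrixP => i k; rewrite !mxE !summxE; apply: eq_bigr => j _; rewrite !mxE. Qed.
End Blocks.

Lemma ul_gram m1 m2 p (L : 'M[C]_(p, m1 + m2)) :
  ulsubmx (adjmx L *m L) = adjmx (lsubmx L) *m lsubmx L.
Proof. by rewrite -[L in LHS]hsubmxK row_gram block_mxKul. Qed.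
Lemma dr_gram m1 m2 p (L : 'M[C]_(p, m1 + m2)) :
  drsubmx (adjmx L *m L) = adjmx (rsubmx L) *m rsubmx L.
Proof. by rewrite -[L in LHS]hsubmxK row_gram block_mxKdr. Qed.

Lemma sum_block m1 m2 r (F : 'I_r -> 'M[C]_m1) (G : 'I_r -> 'M[C]_m2) :
  \sum_l block_mx (F l) 0 0 (G l) = block_mx (\sum_l F l) 0 0 (\sum_l G l).
Proof.
elim: r F G => [|r IH] F G; first by rewrite !big_ord0 block_mx0.
by rewrite !big_ord_recr /= IH add_block_mx !addr0.
Qed.

Lemma lin0 m n (f : 'M[C]_(m, n) -> 'M[C]_(m, n)) : is_linear_map f -> f 0 = 0.
Proof.
move=> H; have h := H 1 0 0; rewrite !scale1r addr0 in h.
have : f 0 - f 0 = f 0 + f 0 - f 0 by rewrite -h.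
by rewrite addrK subrr => <-.
Qed.

Arguments lin0 {m n f}.
Lemma main_thm (a b : nat) (Ha : (0 < a)%N) (Hb : (0 < b)%N)
  (Phi : 'M[C]_(a + b) -> 'M[C]_(a + b))
  (PhiAA : 'M[C]_a -> 'M[C]_a) (PhiBB : 'M[C]_b -> 'M[C]_b)
  (PhiAB : 'M[C]_(a, b) -> 'M[C]_(a, b))
  (PhiBA : 'M[C]_(b, a) -> 'M[C]_(b, a)) :
  quantum_channel Phi ->
  is_linear_map PhiAA -> is_linear_map PhiBB ->
  is_linear_map PhiAB -> is_linear_map PhiBA ->
  PCDS_decomp Phi PhiAA PhiBB PhiAB PhiBA ->
  (degradable Phi <-> degradable PhiAA /\ degradable PhiBB).
Proof.
move=> hPhi lAA lBB lAB lBA hP.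
have ul_Phi Th : ulsubmx (Phi Th) = PhiAA (ulsubmx Th).
  by rewrite hP !add_block_mx block_mxKul !(addr0, add0r).
have dr_Phi Th : drsubmx (Phi Th) = PhiBB (drsubmx Th).
  by rewrite hP !add_block_mx block_mxKdr !(addr0, add0r).
have PhiA X : Phi (block_mx X 0 0 0) = block_mx (PhiAA X) 0 0 0.
  rewrite hP block_mxKul block_mxKur block_mxKdl block_mxKdr.
  by rewrite (lin0 lBB) (lin0 lAB) (lin0 lBA) !add_block_mx !(addr0, add0r).
have PhiB Y : Phi (block_mx 0 0 0 Y) = block_mx 0 0 0 (PhiBB Y).
  rewrite hP block_mxKul block_mxKur block_mxKdl block_mxKdr.
  by rewrite (lin0 lAA) (lin0 lAB) (lin0 lBA) !add_block_mx !(addr0, add0r).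
have bdiag r (K : 'I_r -> 'M[C]_(a + b)) : kraus_of Phi K ->
    forall j, K j = block_mx (ulsubmx (K j)) 0 0 (drsubmx (K j)).
  move=> [_ EK] j.
  have hdl : dlsubmx (K j) = 0.
    apply: (@psd_sum_eq0 _ _ _ (fun j => dlsubmx (K j))).
    have := dr_Phi (block_mx 1%:M 0 0 0).
    rewrite block_mxKdr (lin0 lBB) EK /kraus_map dr_sum => h; rewrite -[X in _ = X]h.
    by apply: eq_bigr => i _; rewrite dl_conj.
  have hur : ursubmx (K j) = 0.
    apply: (@psd_sum_eq0 _ _ _ (fun j => ursubmx (K j))).
    have := ul_Phi (block_mx 0 0 0 1%:M).
    rewrite block_mxKul (lin0 lAA) EK /kraus_map ul_sum => h; rewrite -[X in _ = X]h.
    by apply: eq_bigr => i _; rewrite ur_conj.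
  by rewrite -{1}[K j]submxK hdl hur.
have kAA r (K : 'I_r -> 'M[C]_(a + b)) : kraus_of Phi K ->
    kraus_of PhiAA (fun j => ulsubmx (K j)).
  move=> hK; have bd := bdiag r K hK; case: hK => hKr EK; split.
    rewrite /is_kraus; have := congr1 ulsubmx hKr; rewrite ul_sum (scalar_mx_block a b) block_mxKul => <-.
    by apply: eq_bigr => j _; rewrite [in RHS]bd bd_gram block_mxKul.
  move=> X; have := congr1 ulsubmx (PhiA X); rewrite block_mxKul => <-.
  rewrite EK /kraus_map ul_sum; apply: eq_bigr => j _.
  by rewrite [in LHS]bd bd_conj !block_mxKul.
have kBB r (K : 'I_r -> 'M[C]_(a + b)) : kraus_of Phi K ->
    kraus_of PhiBB (fun j => drsubmx (K j)).
  move=> hK; have bd := bdiag r K hK; case: hK => hKr EK; split.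
    rewrite /is_kraus; have := congr1 drsubmx hKr; rewrite dr_sum (scalar_mx_block a b) block_mxKdr => <-.
    by apply: eq_bigr => j _; rewrite [in RHS]bd bd_gram block_mxKdr.
  move=> X; have := congr1 drsubmx (PhiB X); rewrite block_mxKdr => <-.
  rewrite EK /kraus_map dr_sum; apply: eq_bigr => j _.
  by rewrite [in LHS]bd bd_conj !block_mxKdr.
have compAB r (K : 'I_r -> 'M[C]_(a + b)) : kraus_of Phi K -> forall Th,
    complementary K Th = complementary (fun j => ulsubmx (K j)) (ulsubmx Th)
                       + complementary (fun j => drsubmx (K j)) (drsubmx Th).
  move=> hK Th; have bd := bdiag r K hK; apply/matrixP => j j'.
  by rewrite !mxE (bd j) (bd j') bd_tr !block_mxKul !block_mxKdr.
have compA r (K : 'I_r -> 'M[C]_(a + b)) : kraus_of Phi K -> forall X,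
    complementary (fun j => ulsubmx (K j)) X = complementary K (block_mx X 0 0 0).
  move=> hK X; rewrite (compAB r K hK) block_mxKul block_mxKdr.
  suff -> : complementary (fun j => drsubmx (K j)) 0 = 0 by rewrite addr0.
  by apply/matrixP => j j'; rewrite !mxE mulmx0 mxtrace0.
have compB r (K : 'I_r -> 'M[C]_(a + b)) : kraus_of Phi K -> forall Y,
    complementary (fun j => drsubmx (K j)) Y = complementary K (block_mx 0 0 0 Y).
  move=> hK Y; rewrite (compAB r K hK) block_mxKul block_mxKdr.
  suff -> : complementary (fun j => ulsubmx (K j)) 0 = 0 by rewrite add0r.
  by apply/matrixP => j j'; rewrite !mxE mulmx0 mxtrace0.
split.
  move=> [r [K [hK [Lam [hLam hc]]]]]; split.
    exists r, (fun j => ulsubmx (K j)); split; first exact: kAA.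
    exists (fun Y => Lam (block_mx Y 0 0 0)); split.
      case: hLam => t [L [hL EL]]; exists t, (fun l => lsubmx (L l)); split.
        rewrite /is_kraus; have := congr1 ulsubmx hL.
        rewrite ul_sum (scalar_mx_block a b) block_mxKul => <-.
        by apply: eq_bigr => l _; rewrite ul_gram.
      by move=> Y; rewrite EL /kraus_map; apply: eq_bigr => l _; rewrite row_conj_l.
    by move=> X; rewrite (compA r K hK) hc PhiA.
  exists r, (fun j => drsubmx (K j)); split; first exact: kBB.
  exists (fun Y => Lam (block_mx 0 0 0 Y)); split.
    case: hLam => t [L [hL EL]]; exists t, (fun l => rsubmx (L l)); split.
      rewrite /is_kraus; have := congr1 drsubmx hL.
      rewrite dr_sum (scalar_mx_block a b) block_mxKdr => <-.
      by apply: eq_bigr => l _; rewrite dr_gram.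
    by move=> Y; rewrite EL /kraus_map; apply: eq_bigr => l _; rewrite row_conj_r.
  by move=> X; rewrite (compB r K hK) hc PhiB.
move=> [[rA [P [hPk [LA [hLA hcA]]]]] [rB [T [hTk [LB [hLB hcB]]]]]].
case: hPhi => r [M hM].
have r0 : (0 < r)%N.
  case: r M hM => // M [hk _]; move: hk; rewrite /is_kraus big_ord0.
  move/matrixP/(_ (lshift b (Ordinal Ha)) (lshift b (Ordinal Ha))).
  by rewrite !mxE eqxx => /eqP; rewrite eq_sym oner_eq0.
have [LA' [hLA' hcA']] : exists LA' : 'M[C]_a -> 'M[C]_r, quantum_channel LA' /\
    forall X, complementary (fun j => ulsubmx (M j)) X = LA' (PhiAA X).
  have [L' [hL' hc']] := @kraus_freedom _ _ _ P (fun j => ulsubmx (M j)) LA r0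
    (fun X => etrans (esym (hPk.2 X)) ((kAA r M hM).2 X)) hLA
    (fun X => etrans (hcA X) (congr1 LA (hPk.2 X))).
  by exists L'; split => // X; rewrite hc' -((kAA r M hM).2 X).
have [LB' [hLB' hcB']] : exists LB' : 'M[C]_b -> 'M[C]_r, quantum_channel LB' /\
    forall X, complementary (fun j => drsubmx (M j)) X = LB' (PhiBB X).
  have [L' [hL' hc']] := @kraus_freedom _ _ _ T (fun j => drsubmx (M j)) LB r0
    (fun X => etrans (esym (hTk.2 X)) ((kBB r M hM).2 X)) hLB
    (fun X => etrans (hcB X) (congr1 LB (hTk.2 X))).
  by exists L'; split => // X; rewrite hc' -((kBB r M hM).2 X).
exists r, M; split => //.
exists (fun Y => LA' (ulsubmx Y) + LB' (drsubmx Y)); split; last first.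
  by move=> Th; rewrite (compAB r M hM) hcA' hcB' ul_Phi dr_Phi.
case: hLA' => tA [KA [hKA EKA]]; case: hLB' => tB [KB [hKB EKB]].
pose K (i : 'I_(tA + tB)) : 'M[C]_(r, a + b) :=
  match split i with inl l => row_mx (KA l) 0 | inr l => row_mx 0 (KB l) end.
have KL l : K (lshift tB l) = row_mx (KA l) 0 by rewrite /K (unsplitK (inl _)).
have KR l : K (rshift tA l) = row_mx 0 (KB l) by rewrite /K (unsplitK (inr _)).
exists (tA + tB)%N, K; split.
  rewrite /is_kraus big_split_ord /=.
  under eq_bigr => l _ do rewrite KL row_gram adjmx0 !(mulmx0, mul0mx).
  under [X in _ + X = _]eq_bigr => l _ do rewrite KR row_gram adjmx0 !(mulmx0, mul0mx).
  rewrite !sum_block add_block_mx !big1_eq !(add0r, addr0) hKA hKB.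
  by rewrite (scalar_mx_block a b).
move=> Y; rewrite EKA EKB /kraus_map big_split_ord /=; congr (_ + _).
  by apply: eq_bigr => l _; rewrite KL row0_conj_l.
by apply: eq_bigr => l _; rewrite KR row0_conj_r.
Qed.



End S.

Theorem theorem2 (R : realType) (a b : nat) (Ha : (0 < a)%N) (Hb : (0 < b)%N)
  (Phi : 'M[R[i]]_(a + b) -> 'M[R[i]]_(a + b))
  (PhiAA : 'M[R[i]]_a -> 'M[R[i]]_a) (PhiBB : 'M[R[i]]_b -> 'M[R[i]]_b)
  (PhiAB : 'M[R[i]]_(a, b) -> 'M[R[i]]_(a, b))
  (PhiBA : 'M[R[i]]_(b, a) -> 'M[R[i]]_(b, a)) :
  quantum_channel Phi ->
  is_linear_map PhiAA -> is_linear_map PhiBB ->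
  is_linear_map PhiAB -> is_linear_map PhiBA ->
  PCDS_decomp Phi PhiAA PhiBB PhiAB PhiBA ->
  (degradable Phi <-> degradable PhiAA /\ degradable PhiBB).
Proof. exact: (@main_thm R a b Ha Hb). Qed.
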